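(* If $V=\langle v_1,\dots,v_\ell\rangle$ is a sequence of moves that can be applied (successively) to the distribution $\mu$, then $M_2[V\mu]\le M_2[\bar V\mu]$, where $\bar V$ is the sequence of extreme moves on the same intervals.
   Context: A distribution is a finite set $\{(x_1,m_1),\dots,(x_k,m_k)\}$, $m_i>0$; $\mu(A)=\sum_{x_i\in A}m_i$; $M_j[\mu]=\sum_im_ix_i^j$. A move $v=([a,b],\delta)$ has $\delta$ a signed distribution on $[a,b]$ with $M_0[\delta]=M_1[\delta]=0$; it applies to $\mu$ if $\mu+\delta$ is a distribution, and $v\mu=\mu+\delta$; $V\mu$ is the result of applying the moves in order. The extreme move $\bar v$ on $[a,b]$ maps $\mu$ to the distribution $\mu'$ with $\mu'\{a<x<b\}=0$, $\mu'(\{x\})=\mu(\{x\})$ for $x\notin[a,b]$, $M_0[\mu']=M_0[\mu]$, $M_1[\mu']=M_1[\mu]$. *)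

(* Defs.v *)
From HB Require Import structures.
From mathcomp Require Import all_boot all_order all_algebra.
Set Implicit Arguments. Unset Strict Implicit. Unset Printing Implicit Defensive.
Import Order.TTheory GRing.Theory Num.Theory.
Local Open Scope ring_scope.

Section Moves.
Variable R : realFieldType.

(* A (signed) distribution is represented by a finite list of atoms (x, m). *)
Definition atoms := seq (R * R).

Definition meas (mu : atoms) (A : pred R) : R := \sum_(p <- mu | A p.1) p.2.

Definition mass (mu : atoms) (x : R) : R := meas mu (pred1 x).

Definition moment (j : nat) (mu : atoms) : R := \sum_(p <- mu) p.2 * p.1 ^+ j.

Definition is_distribution (mu : atoms) : Prop :=
  uniq (map fst mu) /\ (forall p, p \in mu -> 0 < p.2).

Definition is_signed_distribution (d : atoms) : Prop :=
  uniq (map fst d) /\ (forall p, p \in d -> p.2 != 0).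

Record move := Move { mv_a : R; mv_b : R; mv_delta : atoms }.

Definition is_move (v : move) : Prop :=
  mv_a v <= mv_b v /\
  is_signed_distribution (mv_delta v) /\
  (forall p, p \in mv_delta v -> mv_a v <= p.1 <= mv_b v) /\
  moment 0 (mv_delta v) = 0 /\ moment 1 (mv_delta v) = 0.

Definition apply_move (v : move) (mu nu : atoms) : Prop :=
  is_distribution nu /\
  forall x, mass nu x = mass mu x + mass (mv_delta v) x.

Definition extreme_move (a b : R) (mu mu' : atoms) : Prop :=
  is_distribution mu' /\
  meas mu' (fun x => a < x < b) = 0 /\
  (forall x, ~~ (a <= x <= b) -> mass mu' x = mass mu x) /\
  moment 0 mu' = moment 0 mu /\ moment 1 mu' = moment 1 mu.

Inductive apply_seq : seq move -> atoms -> atoms -> Prop :=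
| apply_nil mu : apply_seq [::] mu mu
| apply_cons v vs mu mu' nu :
    apply_move v mu mu' -> apply_seq vs mu' nu -> apply_seq (v :: vs) mu nu.

Inductive extreme_seq : seq move -> atoms -> atoms -> Prop :=
| extreme_nil mu : extreme_seq [::] mu mu
| extreme_cons v vs mu mu' nu :
    extreme_move (mv_a v) (mv_b v) mu mu' -> extreme_seq vs mu' nu ->
    extreme_seq (v :: vs) mu nu.

Fixpoint all_moves (V : seq move) : Prop :=
  if V is v :: vs then is_move v /\ all_moves vs else True.

End Moves.

(* Main.v *)
Require Import Defs.
From HB Require Import structures.
From mathcomp Require Import all_boot all_order all_algebra.
Import Order.TTheory GRing.Theory Num.Theory.
Local Open Scope ring_scope.

Section Proof.
Variable R : realFieldType.
Implicit Types (mu nu : atoms R) (f g : R -> R).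

Definition I f mu : R := \sum_(p <- mu) p.2 * f p.1.

Definition convex f := forall x y z : R, x <= y -> y <= z ->
  f y * (z - x) <= f x * (z - y) + f z * (y - x).

Lemma slope_convex f :
  (forall x y z : R, x <= y -> y <= z -> (f y - f x) * (z - y) <= (f z - f y) * (y - x)) ->
  convex f.
Proof.
move=> H x y z xy yz; have := H x y z xy yz.
rewrite !mulrBl => H1.
have -> : z - x = (z - y) + (y - x) by rewrite addrA subrK.
rewrite mulrDr.
rewrite lerBlDr addrAC lerBrDr in H1.
by rewrite [f x * _ + _]addrC.
Qed.

Lemma sqr_convex : convex (fun x => x ^+ 2).
Proof.
apply: slope_convex => x y z xy yz.
rewrite !subr_sqr mulrAC [X in _ <= X]mulrAC [(z - y) * (y - x)]mulrC.
apply: ler_wpM2l; first by rewrite mulr_ge0 // subr_ge0.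
by rewrite [y + x]addrC lerD2r (le_trans xy yz).
Qed.

Lemma max_convex f g : convex f -> convex g -> convex (fun x => Num.max (f x) (g x)).
Proof.
move=> Hf Hg x y z xy yz.
have h1 : 0 <= z - y by rewrite subr_ge0.
have h2 : 0 <= y - x by rewrite subr_ge0.
case: (leP (f y) (g y)) => _.
- apply: le_trans (Hg x y z xy yz) _.
  by apply: lerD; apply: ler_wpM2r => //; rewrite le_max lexx orbT.
- apply: le_trans (Hf x y z xy yz) _.
  by apply: lerD; apply: ler_wpM2r => //; rewrite le_max lexx.
Qed.

Lemma convex_ext f g : f =1 g -> convex f -> convex g.
Proof. by move=> e Hf x y z xy yz; rewrite -!e; apply: Hf. Qed.

Section Chord.
Variables (phi : R -> R) (a b : R).
Definition c1 := (phi b - phi a) / (b - a).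
Definition c0 := phi a - c1 * a.
Definition L x := c0 + c1 * x.
Definition psi x := if a <= x <= b then L x else phi x.

Lemma L_a : L a = phi a.
Proof. by rewrite /L /c0 subrK. Qed.

Lemma L_b : L b = phi b.
Proof.
have [->|ne] := eqVneq b a; first exact: L_a.
have : L b - L a = c1 * (b - a) by rewrite /L opprD addrACA subrr add0r mulrBr.
rewrite /c1 divfK ?subr_eq0 // L_a => /eqP; rewrite subr_eq => /eqP ->.
by rewrite subrK.
Qed.

Lemma Ldiff x y : L y - L x = c1 * (y - x).
Proof. by rewrite /L opprD addrACA subrr add0r mulrBr. Qed.

Lemma L_id x y z : L y * (z - x) = L x * (z - y) + L z * (y - x).
Proof.
have ex : L x = L y - c1 * (y - x) by rewrite -Ldiff subKr.
have ez : L z = L y + c1 * (z - y) by rewrite -Ldiff addrC subrK.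
rewrite ex ez; have -> : z - x = (z - y) + (y - x) by rewrite addrA subrK.
move: (L y) c1 (z - y) (y - x) => l c u v.
rewrite mulrBl mulrDl -!mulrA [v * u]mulrC addrACA addNr addr0 mulrDr.
done.
Qed.

Lemma L_convex : convex L.
Proof. by move=> x y z _ _; rewrite L_id. Qed.

Hypothesis phic : convex phi.
Hypothesis ab : a < b.

Lemma chord_in x : a <= x <= b -> phi x <= L x.
Proof.
case/andP=> ax xb.
have hba : 0 < b - a by rewrite subr_gt0.
rewrite -(ler_pM2r hba) (L_id a) L_a L_b.
exact: (phic _ _ _ ax xb).
Qed.
Lemma chord_out x : ~~ (a <= x <= b) -> L x <= phi x.
Proof.
have hba : 0 < b - a by rewrite subr_gt0.
rewrite negb_and -!ltNge => /orP[xa|bx].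
- have h := phic _ _ _ (ltW xa) (ltW ab).
  by rewrite -(ler_pM2r hba) -(lerD2r (L b * (a - x))) -L_id L_a L_b.
- have h := phic _ _ _ (ltW ab) (ltW bx).
  by rewrite -(ler_pM2r hba) -(lerD2l (L a * (x - b))) -L_id L_a L_b.
Qed.

Lemma psi_max x : psi x = Num.max (phi x) (L x).
Proof.
rewrite /psi; case: ifP => h.
- by rewrite max_r // chord_in.
- by rewrite max_l // chord_out // h.
Qed.
End Chord.

Lemma psi_eq phi a b : ~~ (a < b) -> psi phi a b =1 phi.
Proof.
move=> nab x; rewrite /psi; case: ifP => // /andP[ax xb].
have ea : x = a by apply/eqP; rewrite eq_le ax andbT (le_trans xb) // leNgt.
by rewrite ea L_a.
Qed.

Lemma psi_convex phi a b : convex phi -> convex (psi phi a b).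
Proof.
move=> phic; have [ab|nab] := boolP (a < b).
- apply: (convex_ext (fun x => Num.max (phi x) (L phi a b x))).
    by move=> x; rewrite psi_max.
  by apply: max_convex => //; apply: L_convex.
- by apply: (convex_ext phi) => // x; rewrite psi_eq.
Qed.

Lemma psi_ge phi a b x : convex phi -> phi x <= psi phi a b x.
Proof.
move=> phic; have [ab|nab] := boolP (a < b).
- by rewrite psi_max // le_max lexx.
- by rewrite psi_eq.
Qed.

Lemma I_add f g mu : I (fun x => f x + g x) mu = I f mu + I g mu.
Proof. by rewrite /I -big_split; apply: eq_bigr => p _; rewrite mulrDr. Qed.

Lemma I_affine (u w : R) mu : I (fun x => u + w * x) mu = u * moment 0 mu + w * moment 1 mu.
Proof.
rewrite /I /moment !mulr_sumr -big_split; apply: eq_bigr => p _.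
by rewrite expr0 expr1 mulr1 mulrDr mulrCA [_ * p.2]mulrC.
Qed.

Lemma I_support f mu (s : seq R) : uniq s -> {subset map fst mu <= s} ->
  I f mu = \sum_(x <- s) f x * mass mu x.
Proof.
move=> us sub.
rewrite /mass /meas.
under eq_bigr => x _ do rewrite mulr_sumr big_mkcond.
rewrite exchange_big /I; apply: eq_big_seq => p pin /=.
rewrite -big_mkcond /=.
rewrite (eq_bigl (fun x => pred1 p.1 x)); last by move=> x; rewrite /= eq_sym.
rewrite -big_filter filter_pred1_uniq //; last by apply: sub; apply: map_f.
by rewrite big_seq1 mulrC.
Qed.

Lemma I_eq_mass f mu nu : (forall x, f x != 0 -> mass mu x = mass nu x) ->
  I f mu = I f nu.
Proof.
move=> H.
set s := undup (map fst mu ++ map fst nu).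
have us : uniq s by apply: undup_uniq.
rewrite (I_support f mu s us); last by move=> x xin; rewrite mem_undup mem_cat xin.
rewrite (I_support f nu s us); last by move=> x xin; rewrite mem_undup mem_cat xin orbT.
apply: eq_bigr => x _; have [->|nz] := eqVneq (f x) 0; first by rewrite !mul0r.
by rewrite H.
Qed.

Lemma I_addmass f mu nu d : (forall x, mass nu x = mass mu x + mass d x) ->
  I f nu = I f mu + I f d.
Proof.
move=> H.
set s := undup (map fst nu ++ map fst mu ++ map fst d).
have us : uniq s by apply: undup_uniq.
rewrite (I_support f nu s us); last by move=> x xin; rewrite mem_undup !mem_cat xin.
rewrite (I_support f mu s us); last by move=> x xin; rewrite mem_undup !mem_cat xin orbT.
rewrite (I_support f d s us); last by move=> x xin; rewrite mem_undup !mem_cat xin !orbT.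
by rewrite -big_split; apply: eq_bigr => x _; rewrite H mulrDr.
Qed.

Lemma I_le f g mu : (forall p, p \in mu -> 0 < p.2) -> (forall x, f x <= g x) ->
  I f mu <= I g mu.
Proof.
move=> pos fg; rewrite /I big_seq [X in _ <= X]big_seq; apply: ler_sum => p pin.
by apply: ler_wpM2l; [apply: ltW; apply: pos | apply: fg].
Qed.

Lemma I_ext f g mu : f =1 g -> I f mu = I g mu.
Proof. by move=> e; apply: eq_bigr => p _; rewrite e. Qed.

Definition chi phi a b x := if a <= x <= b then 0 else phi x - L phi a b x.

Lemma I_psi phi a b mu : I (psi phi a b) mu =
  I (chi phi a b) mu + (c0 phi a b * moment 0 mu + c1 phi a b * moment 1 mu).
Proof.
rewrite -I_affine -I_add; apply: I_ext => x.
by rewrite /psi /chi /L; case: ifP => _; rewrite ?add0r ?subrK.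
Qed.

Lemma sum_nonneg (P : pred R) (r : atoms R) : (forall q, q \in r -> 0 < q.2) ->
  0 <= \sum_(q <- r | P q.1) q.2.
Proof.
move=> pos; rewrite big_seq_cond; apply: sumr_ge0 => q /andP[qin _].
exact: ltW (pos q qin).
Qed.

Lemma sum_ge_elem (P : pred R) (r : atoms R) p : (forall q, q \in r -> 0 < q.2) ->
  p \in r -> P p.1 -> p.2 <= \sum_(q <- r | P q.1) q.2.
Proof.
move=> pos pin Pp; rewrite (big_rem p pin) Pp lerDl.
apply: sum_nonneg => q qin; apply: pos; exact: mem_rem qin.
Qed.

Lemma extreme_I phi a b mu mu' : extreme_move a b mu mu' ->
  I phi mu' = I (psi phi a b) mu.
Proof.
case=> [[_ pos] [m0 [mout [e0 e1]]]].
have noin p : p \in mu' -> ~~ (a < p.1 < b).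
  move=> pin; apply/negP => h.
  have := @sum_ge_elem (fun x => a < x < b) mu' p pos pin h.
  rewrite -/(meas mu' (fun x => a < x < b)) m0.
  by rewrite leNgt (pos p pin).
transitivity (I (psi phi a b) mu').
  apply: eq_big_seq => p pin; congr (_ * _).
  have := noin p pin; rewrite /psi; case: ifP => // /andP[ax xb] nin.
  have [ea|nea] := eqVneq p.1 a; first by rewrite ea L_a.
  have xb' : p.1 = b.
    apply/eqP; rewrite eq_le xb /=; move: nin.
    by rewrite lt_neqAle eq_sym nea ax /= -leNgt.
  by rewrite xb' L_b.
rewrite !I_psi e0 e1; congr (_ + _).
apply: I_eq_mass => x; rewrite /chi; case: ifP => [_|h _]; first by rewrite eqxx.
by apply: mout; rewrite h.
Qed.

Lemma apply_I phi v mu nu : is_move v -> apply_move v mu nu ->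
  I (psi phi (mv_a v) (mv_b v)) nu = I (psi phi (mv_a v) (mv_b v)) mu.
Proof.
case=> [_ [_ [inab [d0 d1]]]] [_ H].
rewrite (I_addmass _ _ _ _ H) (I_psi _ _ _ (mv_delta v)) d0 d1 !mulr0 addr0.
have -> : I (chi phi (mv_a v) (mv_b v)) (mv_delta v) = 0.
  by apply: big1_seq => p /andP[_ pin]; rewrite /chi inab // mulr0.
by rewrite !addr0.
Qed.

Lemma main_ind V mu Vmu : apply_seq V mu Vmu -> all_moves V ->
  forall mu' bVmu, extreme_seq V mu' bVmu ->
  (forall phi, convex phi -> I phi mu <= I phi mu') ->
  forall phi, convex phi -> I phi Vmu <= I phi bVmu.
Proof.
elim=> [m|v vs m m1 n app _ IH] /= allm mu' bVmu ext cx.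
  by inversion ext; subst.
case: allm => mv allm.
inversion ext as [|v' vs' m' m1' n' emv eseq]; subst.
apply: (IH allm m1' _ eseq) => phi phic.
have pos : forall p, p \in m1 -> 0 < p.2 by case: app => [[_ pos] _].
apply: (le_trans (I_le phi (psi phi (mv_a v) (mv_b v)) m1 pos
   (fun x => psi_ge phi (mv_a v) (mv_b v) x phic))).
rewrite (apply_I phi v m m1 mv app) (extreme_I phi _ _ _ _ emv).
by apply: cx; apply: psi_convex.
Qed.
End Proof.

Theorem mainTheorem12 (R : realFieldType) (mu : atoms R) (V : seq (move R))
    (Vmu barVmu : atoms R) :
  is_distribution mu ->
  all_moves V ->
  apply_seq V mu Vmu ->
  extreme_seq V mu barVmu ->
  moment 2 Vmu <= moment 2 barVmu.
Proof.
move=> _ allm app ext.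
exact: (@main_ind R V mu Vmu app allm mu barVmu ext (fun phi _ => lexx _) (fun x => x ^+ 2) (@sqr_convex R)).
Qed.
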